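(* Let $c\in[0,1]$ with $c\neq\frac12$, and define $f_c:[0,1]\to[0,1]$ by $$f_c(x)=\begin{cases} x, & x\in[0,\frac23),\\ (1-2c)x^2+2cx, & x\in[\frac23,1].\end{cases}$$ Let $f_c^n$ denote the $n$-fold composition of $f_c$ with itself and $x^{(n)}=f_c^n(x^{(0)})$. Then: 1. The set of fixed points of $f_c$ is $[0,\frac23)\cup\{1\}$. 2. If $0\le c<\frac12$, then for every $x^{(0)}\in[\frac23,1)$ there exist $n\in\mathbb N$ and $p\in[\frac49(1+c),\frac23)$ such that $f_c^n(x^{(0)})=p$ and $f_c^{n+1}(x^{(0)})=f_c(p)=p$. 3. If $\frac12<c\le1$, then $\lim_{n\to\infty}x^{(n)}=1$ for every $x^{(0)}\in[\frac23,1]$.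
   Context: This map is the reduction to $[0,1]$ of the quadratic stochastic operator $x'=x^2+2p(x)xy$, $y'=2(1-p(x))xy+y^2$ (with $y=1-x$), where $p(x)=a$ for $x\le\frac13$, $b$ for $\frac13<x<\frac23$, $c$ for $x\ge\frac23$, in the case $a=b=\frac12$. *)

(* Defs.v *)
From Stdlib Require Import Reals.
Open Scope R_scope.

(* f_c on [0,1]; defined on all of R, only used on [0,1]. *)
Definition fc (c x : R) : R :=
  if Rlt_dec x (2/3) then x else (1 - 2*c) * x^2 + 2*c*x.

Fixpoint fiter (c : R) (n : nat) (x : R) : R :=
  match n with
  | O => x
  | S m => fc c (fiter c m x)
  end.

(* Main.v *)
Require Import Defs.
From Stdlib Require Import Reals Lra Psatz.
Open Scope R_scope.

Lemma fc_lo (c x : R) : x < 2/3 -> fc c x = x.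
Proof. intro h. unfold fc. destruct (Rlt_dec x (2/3)); lra. Qed.

Lemma fc_hi (c x : R) : 2/3 <= x -> fc c x = (1 - 2*c) * x^2 + 2*c*x.
Proof. intro h. unfold fc. destruct (Rlt_dec x (2/3)); lra. Qed.

Theorem theorem2p3 (c : R) (hc0 : 0 <= c) (hc1 : c <= 1) (hc : c <> 1/2) :
  (forall x : R, 0 <= x <= 1 ->
     (fc c x = x <-> ((0 <= x < 2/3) \/ x = 1)))
  /\
  (c < 1/2 -> forall x0 : R, 2/3 <= x0 < 1 ->
     exists (n : nat) (p : R),
       4/9 * (1 + c) <= p < 2/3 /\
       fiter c n x0 = p /\ fiter c (S n) x0 = fc c p /\ fc c p = p)
  /\
  (1/2 < c -> forall x0 : R, 2/3 <= x0 <= 1 ->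
     Un_cv (fun n => fiter c n x0) 1).
Proof.
  split; [|split].
  - intros x hx. destruct (Rlt_dec x (2/3)) as [h|h].
    + rewrite fc_lo by lra. lra.
    + rewrite fc_hi by lra. split.
      * intro e. right.
        assert (e2 : (1 - 2*c) * (x * (x - 1)) = 0) by (simpl in e; nra).
        apply Rmult_integral in e2. destruct e2 as [e2|e2]; [lra|].
        apply Rmult_integral in e2. lra.
      * intros [e|e]; [lra|]. subst. simpl. ring.
  - intros hlt x0 hx0.
    set (d := (1 - 2*c) * (2/3) * (1 - x0)).
    assert (hd : 0 < d).
    { unfold d. apply Rmult_lt_0_compat; [|lra]. lra. }
    assert (P : forall n, (exists k, 4/9*(1+c) <= fiter c k x0 < 2/3) \/
                          (2/3 <= fiter c n x0 <= x0 - INR n * d)).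
    { induction n as [|n IH].
      - right. simpl. lra.
      - destruct IH as [IH|[h1 h2]]; [left; exact IH|].
        set (y := fiter c n x0) in *.
        assert (hy : fiter c (S n) x0 = (1 - 2*c) * y^2 + 2*c*y).
        { simpl. apply fc_hi. exact h1. }
        assert (hn : 0 <= INR n) by apply pos_INR.
        assert (hy1 : y <= x0) by nra.
        assert (g1 : 4/9*(1+c) <= (1 - 2*c) * y^2 + 2*c*y).
        { assert (0 <= (y - 2/3) * ((1-2*c)*(y+2/3) + 2*c)) by
            (apply Rmult_le_pos; nra).
          simpl. nra. }
        assert (g2 : (1 - 2*c) * y^2 + 2*c*y <= y - d).
        { unfold d. simpl.
          assert (0 <= (1-2*c) * ((y - 2/3) * (1 - x0))) by
            (apply Rmult_le_pos; [lra|apply Rmult_le_pos; lra]).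
          assert (0 <= (1-2*c) * (y * (x0 - y))) by
            (apply Rmult_le_pos; [lra|apply Rmult_le_pos; lra]).
          nra. }
        destruct (Rlt_dec (fiter c (S n) x0) (2/3)) as [l|l].
        + left. exists (S n). lra.
        + right. rewrite S_INR. lra. }
    destruct (INR_unbounded ((x0 - 2/3) / d)) as [N HN].
    destruct (P N) as [[k Hk]|[h1 h2]].
    + exists k, (fiter c k x0). repeat split; try lra.
      apply fc_lo; lra.
    + exfalso. apply Rmult_gt_compat_r with (r := d) in HN; [|lra].
      unfold Rdiv in HN. rewrite Rmult_assoc, Rinv_l in HN by lra. lra.
  - intros hgt x0 hx0.
    set (k := 1 - (2*c - 1) * (2/3)).
    assert (B : forall n, 2/3 <= fiter c n x0 <= 1 /\
                          1 - fiter c n x0 <= k^n * (1 - x0)).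
    { induction n as [|n [[h1 h2] h3]].
      - simpl. lra.
      - set (y := fiter c n x0) in *.
        assert (hy : fiter c (S n) x0 = (1 - 2*c) * y^2 + 2*c*y).
        { simpl. apply fc_hi. exact h1. }
        rewrite hy.
        assert (e : 1 - ((1 - 2*c) * y^2 + 2*c*y) = (1 - y) * (1 + (1-2*c)*y))
          by (simpl; ring).
        assert (f1 : 0 <= 1 + (1-2*c)*y) by nra.
        assert (f2 : 1 + (1-2*c)*y <= k) by (unfold k; nra).
        assert (hk : 0 <= k) by (unfold k; lra).
        split; [split|].
        + assert (0 <= (2*c-1) * (y*(1-y))) by
            (apply Rmult_le_pos; [lra|apply Rmult_le_pos; lra]).
          simpl. nra.
        + assert (0 <= (1 - y) * (1 + (1-2*c)*y)) by (apply Rmult_le_pos; lra).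
          lra.
        + rewrite e. simpl.
          assert ((1 - y) * (1 + (1-2*c)*y) <= (1-y) * k) by
            (apply Rmult_le_compat_l; lra).
          assert ((1-y)*k <= k * (k^n * (1 - x0))) by nra.
          lra. }
    intros eps heps.
    assert (hk : Rabs k < 1).
    { unfold k. rewrite Rabs_right; lra. }
    destruct (pow_lt_1_zero k hk eps heps) as [N HN].
    exists N. intros n hn. specialize (HN n hn). specialize (B n).
    unfold R_dist. destruct B as [[b1 b2] b3].
    assert (0 <= k^n) by (apply pow_le; unfold k; lra).
    rewrite Rabs_left1 in * by lra.
    rewrite Rabs_right in HN by lra.
    assert (k^n * (1 - x0) <= k^n) by nra.
    lra.
Qed.
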